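(* Let $L,k$ be natural numbers and let $G=(V,E)$ be a simple, undirected, connected graph whose vertex set can be covered by $L$ balls of radius $k$ (i.e. there are $u_1,\dots,u_L\in V$ with every vertex at distance at most $k$ from some $u_j$). Then the cat can localise the mouse up to distance $4L+k$ in $G$ by time $2L$.
   Context: The Cat and Mouse game on $G$ proceeds in time steps $i=1,2,\dots$. The mouse occupies vertices $m_1,m_2,\dots$, where for $i\ge2$, $m_i$ equals $m_{i-1}$ or is a neighbour of $m_{i-1}$. At time $i$ the cat tests an arbitrary vertex $c_i$; for $i\ge2$ it is told $b_i=1$ if $d(c_i,m_i)\le d(c_{i-1},m_{i-1})$ and $b_i=0$ otherwise ($d$ = graph distance). A cat strategy is $(c_1,c_2,f)$ with $f:\bigcup_{i\in\mathbb N}\{0,1\}^i\to V(G)$ and $c_i=f(b_2,\dots,b_{i-1})$ for $i\ge3$ (deterministic, fixed in advance). $M_i$ is the set of vertices $v$ for which there exist $\tilde m_1,\dots,\tilde m_i$ with $\tilde m_i=v$, each $\tilde m_j$ in the closed neighbourhood of $\tilde m_{j-1}$, and for each $2\le j\le i$: $d(c_j,\tilde m_j)\le d(c_{j-1},\tilde m_{j-1})$ iff $b_j=1$. $\mathrm{rad}_G(W)=\min_{v\in V(G)}\max_{w\in W}d(v,w)$. The cat can localise the mouse up to distance $d$ by time $t$ if there is a cat strategy such that, for every admissible mouse sequence, some $i\le t$ satisfies $\mathrm{rad}_G(M_i)\le d$. *)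

(* Defs.v *)
From Stdlib Require Import Arith List ClassicalEpsilon.
Import ListNotations.

Section Game.
Context {V : Type} (adj : V -> V -> Prop).

Inductive walk : V -> V -> nat -> Prop :=
| walk0 u : walk u u 0
| walkS u v w n : adj u v -> walk v w n -> walk u w (S n).

Definition connected : Prop := forall u v : V, exists n, walk u v n.

Definition is_dist (u v : V) (n : nat) : Prop :=
  walk u v n /\ forall m, walk u v m -> n <= m.

(* graph distance d(u,v) (well defined = least walk length when G is connected) *)
Definition dist (u v : V) : nat := epsilon (inhabits 0) (fun n => is_dist u v n).

Definition cnbr (u v : V) : Prop := v = u \/ adj u v.

(* Cat strategy (c1, c2, f); mouse sequence m : nat -> V, indexed from 1.
   play n = ([b_2; ...; b_n], c_n) for n >= 1. *)
Fixpoint play (c1 c2 : V) (f : list bool -> V) (m : nat -> V) (n : nat)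
  : list bool * V :=
  match n with
  | 0 => ([], c1)
  | S n' =>
      match n' with
      | 0 => ([], c1)
      | S _ =>
          let '(h, cn') := play c1 c2 f m n' in
          let cn := if Nat.eqb n' 1 then c2 else f h in
          (h ++ [Nat.leb (dist cn (m n)) (dist cn' (m n'))], cn)
      end
  end.

Definition cat (c1 c2 : V) (f : list bool -> V) (m : nat -> V) (i : nat) : V :=
  snd (play c1 c2 f m i).

Definition bit (c1 c2 : V) (f : list bool -> V) (m : nat -> V) (i : nat) : bool :=
  Nat.leb (dist (cat c1 c2 f m i) (m i)) (dist (cat c1 c2 f m (i - 1)) (m (i - 1))).

Definition admissible (m : nat -> V) : Prop :=
  forall i, 2 <= i -> cnbr (m (i - 1)) (m i).

Definition Mset (c1 c2 : V) (f : list bool -> V) (m : nat -> V) (i : nat) (v : V)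
  : Prop :=
  exists mt : nat -> V,
    mt i = v /\
    (forall j, 2 <= j <= i -> cnbr (mt (j - 1)) (mt j)) /\
    (forall j, 2 <= j <= i ->
       (dist (cat c1 c2 f m j) (mt j) <= dist (cat c1 c2 f m (j - 1)) (mt (j - 1))
        <-> bit c1 c2 f m j = true)).

Definition rad_le (W : V -> Prop) (d : nat) : Prop :=
  exists v : V, forall w, W w -> dist v w <= d.

Definition can_localise (d t : nat) : Prop :=
  exists (c1 c2 : V) (f : list bool -> V),
    forall m : nat -> V, admissible m ->
      exists i, 1 <= i <= t /\ rad_le (Mset c1 c2 f m i) d.

End Game.

(* Main.v *)
Require Import Defs.
From Stdlib Require Import Arith.
From Stdlib Require Import Lia List Classical ClassicalEpsilon.
Import ListNotations.

Section Aux.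
Context {V : Type} (adj : V -> V -> Prop).

Lemma walk_snoc x y n z : walk adj x y n -> adj y z -> walk adj x z (S n).
Proof.
  induction 1 as [|u v w n Ha Hw IH]; intros H.
  - apply walkS with z; [exact H| constructor].
  - apply walkS with v; auto.
Qed.

Lemma least_ex (P : nat -> Prop) : (exists n, P n) -> exists n, P n /\ forall m, P m -> n <= m.
Proof.
  intros [n Hn]. revert Hn. induction n as [n IH] using lt_wf_ind. intros Hn.
  destruct (classic (exists m, m < n /\ P m)) as [[m [Hm1 Hm2]]|Hno].
  - exact (IH m Hm1 Hm2).
  - exists n; split; auto. intros m Hm. destruct (le_lt_dec n m); auto.
    exfalso; apply Hno; eauto.
Qed.

Lemma dist_spec (Hc : connected adj) x y : is_dist adj x y (dist adj x y).
Proof.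
  unfold dist. apply epsilon_spec. apply least_ex. apply Hc.
Qed.

Lemma dist_step1 (Hc : connected adj) x y z : cnbr adj y z -> dist adj x z <= dist adj x y + 1.
Proof.
  intros [->|H]; [lia|].
  destruct (dist_spec Hc x y) as [W _]. destruct (dist_spec Hc x z) as [_ M].
  specialize (M _ (walk_snoc _ _ _ _ W H)). lia.
Qed.

Lemma dist_step2 (Hs : forall u v, adj u v -> adj v u) (Hc : connected adj) x y z :
  cnbr adj y z -> dist adj x y <= dist adj x z + 1.
Proof.
  intros [->|H]; [lia|]. apply dist_step1; auto. right; auto.
Qed.

Lemma play_SS c1 c2 f m n : play adj c1 c2 f m (S (S n)) =
  let '(h, cn') := play adj c1 c2 f m (S n) in
  let cn := if Nat.eqb (S n) 1 then c2 else f h in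
  (h ++ [Nat.leb (dist adj cn (m (S (S n)))) (dist adj cn' (m (S n)))], cn).
Proof. reflexivity. Qed.

Lemma play_fst c1 c2 f m n : 1 <= n ->
  fst (play adj c1 c2 f m n) = map (fun k => bit adj c1 c2 f m (k+2)) (seq 0 (n-1)).
Proof.
  induction n as [|n IH]; intros Hn; [lia|].
  destruct n as [|n]; [reflexivity|].
  specialize (IH ltac:(lia)).
  replace (S (S n) - 1) with (S n) by lia. rewrite seq_S, map_app. cbn [map]. replace (0 + n) with n by lia.
  replace (S n - 1) with n in IH by lia. rewrite <- IH.
  unfold bit, cat. replace (n + 2 - 1) with (S n) by lia. replace (n+2) with (S (S n)) by lia.
  rewrite play_SS.
  destruct (play adj c1 c2 f m (S n)) as [h cn] eqn:E. cbn [fst snd].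
  reflexivity.
Qed.

Lemma cat_ge3 c1 c2 f m i : 3 <= i ->
  cat adj c1 c2 f m i = f (map (fun k => bit adj c1 c2 f m (k+2)) (seq 0 (i-2))).
Proof.
  intros Hi. destruct i as [|[|[|i]]]; try lia.
  unfold cat. rewrite play_SS.
  pose proof (play_fst c1 c2 f m (S (S i)) ltac:(lia)) as P.
  destruct (play adj c1 c2 f m (S (S i))) as [h cn]. cbn in P |- *.
  rewrite P. replace (i - 0) with i by lia. reflexivity.
Qed.

Lemma cat1 c1 c2 f m : cat adj c1 c2 f m 1 = c1.
Proof. reflexivity. Qed.
Lemma cat2 c1 c2 f m : cat adj c1 c2 f m 2 = c2.
Proof. reflexivity. Qed.

End Aux.

Fixpoint chB {V : Type} (us : nat -> V) (B : nat -> bool) (j : nat) : V :=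
  match j with
  | 0 => us 0
  | S j' => if B (2 * j' + 2) then us j' else chB us B j'
  end.

Definition strat {V : Type} (us : nat -> V) (h : list bool) : V :=
  let n := length h in
  if Nat.even n then us (Nat.div2 n)
  else chB us (fun k => nth (k - 2) h false) (Nat.div2 (S n)).

Lemma chB_ext {V : Type} (us : nat -> V) B B' j :
  (forall k, 2 <= k <= 2 * j -> B k = B' k) -> chB us B j = chB us B' j.
Proof.
  induction j as [|j IH]; intros H; [reflexivity|].
  cbn [chB]. rewrite (H (2*j+2)) by lia. rewrite IH; auto.
  intros k Hk; apply H; lia.
Qed.

Section Strat.
Context {V : Type} (adj : V -> V -> Prop) (us : nat -> V) (m : nat -> V).
Let B := bit adj (us 0) (us 0) (strat us) m.
Let C := cat adj (us 0) (us 0) (strat us) m.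

Lemma cat_even j : C (2 * j + 2) = us j.
Proof.
  destruct j as [|j]; [reflexivity|].
  unfold C. rewrite cat_ge3 by lia. set (h := (map _ _)).
  assert (Hl : length h = 2 * S j) by (subst h; rewrite length_map, length_seq; lia).
  unfold strat. rewrite Hl.
  rewrite Nat.even_even, Nat.div2_double. reflexivity.
Qed.

Lemma cat_odd j : C (2 * j + 1) = chB us B j.
Proof.
  destruct j as [|j]; [reflexivity|].
  unfold C. rewrite cat_ge3 by lia. set (h := (map _ _)).
  assert (Hl : length h = 2 * j + 1) by (subst h; rewrite length_map, length_seq; lia).
  unfold strat. rewrite Hl.
  rewrite Nat.even_odd. replace (S (2 * j + 1)) with (2 * S j) by lia.
  rewrite Nat.div2_double. apply chB_ext.
  intros k Hk. subst h.
  rewrite nth_indep with (d' := (fun k => bit adj (us 0) (us 0) (strat us) m (k + 2)) 0)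
    by (rewrite length_map, length_seq; lia).
  rewrite (map_nth (fun k0 => bit adj (us 0) (us 0) (strat us) m (k0 + 2)) _ 0 (k-2)), seq_nth by lia. unfold B. f_equal. lia.
Qed.

End Strat.

Theorem lemma4p2 (L k : nat) (V : Type) (adj : V -> V -> Prop)
  (Hsym : forall u v, adj u v -> adj v u)
  (Hirr : forall u, ~ adj u u)
  (Hne : inhabited V)
  (Hconn : connected adj)
  (Hcover : exists us : nat -> V,
      forall v : V, exists j, j < L /\ dist adj (us j) v <= k) :
  can_localise adj (4 * L + k) (2 * L).
Proof.
  destruct Hcover as [us Hus].
  assert (HL : 1 <= L) by (destruct Hne as [v0]; destruct (Hus v0) as [j [Hj _]]; lia).
  exists (us 0), (us 0), (strat us). intros m Hm.
  exists (2 * L). split; [lia|].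
  set (B := bit adj (us 0) (us 0) (strat us) m).
  exists (chB us B L). intros v [mt [Hv [Hadj Hcons]]].
  assert (D1 : forall x t, 2 <= t <= 2 * L -> dist adj x (mt t) <= dist adj x (mt (t - 1)) + 1)
    by (intros; apply dist_step1; auto).
  assert (D2 : forall x t, 2 <= t <= 2 * L -> dist adj x (mt (t - 1)) <= dist adj x (mt t) + 1)
    by (intros; apply dist_step2; auto).
  assert (Inv : forall j, 1 <= j <= L -> forall l, l < j ->
    dist adj (chB us B j) (mt (2 * j)) <= dist adj (us l) (mt (2 * j)) + 4 * (j - 1)).
  { induction j as [|J IH]; intros Hj l Hl; [lia|].
    destruct J as [|j].
    - cbn [chB]. replace l with 0 by lia. destruct (B (2 * 0 + 2)); lia.
    - set (J := S j) in *.
      specialize (IH ltac:(lia)).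
      pose proof (Hcons (2 * J + 2) ltac:(lia)) as HC.
      replace (2 * J + 2 - 1) with (2 * J + 1) in HC by lia.
      rewrite cat_even, cat_odd in HC. fold B in HC.
      replace (2 * S J) with (2 * J + 2) by lia.
      pose proof (D1 (chB us B J) (2 * J + 1) ltac:(lia)) as E1.
      pose proof (D1 (chB us B J) (2 * J + 2) ltac:(lia)) as E2.
      pose proof (D2 (us J) (2 * J + 2) ltac:(lia)) as E3.
      replace (2 * J + 1 - 1) with (2 * J) in E1 by lia.
      replace (2 * J + 2 - 1) with (2 * J + 1) in E2, E3 by lia.
      cbn [chB]. fold J.
      destruct (Nat.eq_dec l J) as [->|Hlj].
      + destruct (B (2 * J + 2)) eqn:Eb; [lia|].
        assert (~ dist adj (us J) (mt (2 * J + 2)) <= dist adj (chB us B J) (mt (2 * J + 1)))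
          by (intro H; apply HC in H; discriminate).
        lia.
      + specialize (IH l ltac:(lia)).
        pose proof (D2 (us l) (2 * J + 1) ltac:(lia)) as F1.
        pose proof (D2 (us l) (2 * J + 2) ltac:(lia)) as F2.
        replace (2 * J + 1 - 1) with (2 * J) in F1 by lia.
        replace (2 * J + 2 - 1) with (2 * J + 1) in F2 by lia.
        destruct (B (2 * J + 2)) eqn:Eb.
        * assert (dist adj (us J) (mt (2 * J + 2)) <= dist adj (chB us B J) (mt (2 * J + 1)))
            by (apply HC; reflexivity).
          lia.
        * lia. }
  destruct (Hus v) as [l [Hl Hk]].
  specialize (Inv L ltac:(lia) l Hl). rewrite Hv in Inv. lia.
Qed.
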